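(* In Algorithm MV (see context), if all processes are correct and they all propose the same value $v$, then WHP all processes decide $v$.
   Context: System and adversary: a well-known static set $\Pi$ of $n$ processes; an adversary may adaptively corrupt up to $f=(\frac13-\epsilon)n$ processes during a run, where $\frac{1}{2\ln n}<\epsilon<\frac13$. Corrupted (Byzantine) processes may deviate arbitrarily; uncorrupted processes are correct. Once the adversary corrupts a process it cannot replace messages that process already sent while correct. Every pair of processes is connected by a reliable authenticated link; the network is asynchronous. There is a trusted PKI; the adversary is computationally bounded; $\langle v\rangle_i$ denotes $v$ signed by $p_i$. Validated committee sampling: each $p_i$ has a private function $\mathit{sample}_i(s,\lambda)$ returning $\langle v_i,\sigma_i\rangle$ with $v_i\in\{\mathit{true},\mathit{false}\}$ ($p_i$ is ''sampled'' iff $v_i=\mathit{true}$, probability $\lambda/n$) and an unforgeable publicly verifiable proof $\sigma_i$; ''validly sampled $p_j$'' means the message carries a valid such proof. Let $C(s,\lambda)$ be the committee for $s,\lambda$. Parameters: $\lambda=8\ln n$; $\frac1\lambda<d<\frac\epsilon3-\frac1{3\lambda}$; $W=\lceil(\frac23+3d)\lambda\rceil$, $B=\lfloor(\frac13-d)\lambda\rfloor$. Assumed WHP for each committee: (S3) at least $W$ members are correct; (S4) at most $B$ members are Byzantine; (S5) any two $W$-subsets of the committee intersect in at least $B+1$ processes. WHP means with probability tending to $1$ as $n\to\infty$. The binary BA used is a black-box Binary Strong BA WHP: WHP strong unanimity (if all correct processes propose the same bit, any deciding correct process decides it), agreement, and termination. Algorithm MV (code for $p_i$ with input $v_i$; local: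 $\mathit{count}=0$, empty sets $\mathit{init\text{-}set},\mathit{init\text{-}values\text{-}set},\mathit{converge\text{-}set}$): (1) If $p_i$ is sampled for $(\textsc{init},\lambda)$, broadcast $\langle\textsc{init},v_i\rangle_i$. (2) On receiving $\langle\textsc{init},v_j\rangle_j$ from validly sampled $p_j$: add $j$ to $\mathit{init\text{-}set}$, $v_j$ to $\mathit{init\text{-}values\text{-}set}$. If $p_i$ is sampled for $(\textsc{converge},\lambda)$ and $|\mathit{init\text{-}set}|=W$ for the first time: if $\mathit{init\text{-}values\text{-}set}=\{v_i\}$, batch the $W$ signed \textsc{init} messages into $QC_{v_i}$ and send $\langle\textsc{converge},\mathit{true},QC_{v_i}\rangle_i$ to all; else send $\langle\textsc{converge},\mathit{false},\bot\rangle_i$ to all. (3) On receiving $\langle\textsc{converge},\mathit{is\_content},QC_v\rangle_j$ from validly sampled $p_j$: add $j$ to $\mathit{converge\text{-}set}$; if $\mathit{is\_content}=\mathit{true}$ increment $\mathit{count}$. When $|\mathit{converge\text{-}set}|=W$ for the first time: $\mathit{alert}\gets(\mathit{count}<B+1)$; run binary BA on $\mathit{alert}$; if the output is $\mathit{true}$ decide $\bot$; else wait for some $\langle\textsc{converge},\mathit{true},QC_v\rangle_j$ from a validly sampled $p_j$ and decide $v$. A valid $QC_v$ consists of $W$ signed \textsc{init} messages on $v$ from $W$ distinct validly sampled processes. *)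

(* Defs.v *)
From HB Require Import structures.
From mathcomp Require Import all_boot all_order all_algebra.
From mathcomp Require Import all_classical all_reals all_analysis.
Set Implicit Arguments. Unset Strict Implicit. Unset Printing Implicit Defensive.
Import Order.TTheory GRing.Theory Num.Theory.

Local Open Scope ring_scope.

Section Params.
Variable R : realType.

Definition lam (n : nat) : R := 8 * ln (n%:R).

Definition Wpar (n : nat) (d : R) : nat := `|Num.ceil ((2/3 + 3 * d) * lam n)|%N.
Definition Bpar (n : nat) (d : R) : nat := `|Num.floor ((1/3 - d) * lam n)|%N.

Definition params_ok (n : nat) (eps d : R) : Prop :=
  1 / (2 * ln (n%:R)) < eps /\ eps < 1/3 /\
  1 / lam n < d /\ d < eps / 3 - 1 / (3 * lam n).
End Params.

(* A complete (infinite) asynchronous run of MV among n processes, all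
   correct.  Only delivery orders matter for the algorithm's behaviour. *)
Record MVRun (V : eqType) (n : nat) := {
  inp  : 'I_n -> V;
  sI   : 'I_n -> bool;         (* p_i sampled for (INIT, lambda) *)
  sC   : 'I_n -> bool;         (* p_i sampled for (CONVERGE, lambda) *)
  rI   : 'I_n -> seq 'I_n;     (* senders of INIT msgs, in p_i's delivery order *)
  rC   : 'I_n -> seq 'I_n;     (* senders of CONVERGE msgs, in p_i's delivery order *)
  baout : 'I_n -> option bool;
  chosen : 'I_n -> 'I_n        (* sender of the CONVERGE-true message p_i waits for *)
}.

Section MVSemantics.
Local Open Scope nat_scope.
Variables (V : eqType) (n : nat) (W B : nat) (r : MVRun V n).

Definition initCommittee : {set 'I_n} := [set j | sI r j].
Definition convCommittee : {set 'I_n} := [set j | sC r j].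

(* is_content of p_j's CONVERGE message: init-values-set = {v_j} at the
   moment |init-set| = W, i.e. the first W INIT messages received carry v_j;
   its QC then certifies v_j. *)
Definition content (j : 'I_n) : bool :=
  all (fun k => inp r k == inp r j) (take W (rI r j)).

Definition convSender (j : 'I_n) : bool := sC r j && (W <= size (rI r j)).

(* p_i reaches |converge-set| = W and hence invokes the binary BA. *)
Definition invokesBA (i : 'I_n) : bool := W <= size (rC r i).

Definition cnt (i : 'I_n) : nat := count content (take W (rC r i)).
Definition alert (i : 'I_n) : bool := cnt i < B.+1.

(* Well-formedness of a fault-free run: reliable, authenticated links deliver
   every message sent exactly once (eventually); p_i waiting for a
   CONVERGE-true message gets one whenever one is sent to it. *)
Definition wf_run : Prop :=
  (forall i, perm_eq (rI r i) [seq j <- enum 'I_n | sI r j]) /\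
  (forall i, perm_eq (rC r i) [seq j <- enum 'I_n | convSender j]) /\
  (forall i, has content (rC r i) ->
       (chosen r i \in rC r i) && content (chosen r i)).

(* The binary strong BA black box behaves correctly in this run
   (all processes are correct). *)
Definition BA_good : Prop :=
  (forall i j b b', invokesBA i -> invokesBA j ->
     baout r i = Some b -> baout r j = Some b' -> b = b') /\
  (forall b, (forall i, invokesBA i /\ alert i = b) ->
     forall i b', invokesBA i -> baout r i = Some b' -> b' = b) /\
  ((forall i, invokesBA i) -> forall i, invokesBA i -> baout r i <> None).

(* Committee assumptions (S3), (S4), (S5) for committee C when all
   processes are correct ((S4) is then vacuous: 0 <= B). *)
Definition committee_ok (C : {set 'I_n}) : Prop :=
  (W <= #|C|)%N /\
  (forall S1 S2 : {set 'I_n}, S1 \subset C -> S2 \subset C ->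
     #|S1| = W -> #|S2| = W -> (B.+1 <= #|S1 :&: S2|)%N).

(* p_i decides x (None stands for bottom). *)
Definition decides (i : 'I_n) (x : option V) : Prop :=
  invokesBA i /\
  ((baout r i = Some true /\ x = None) \/
   (baout r i = Some false /\ chosen r i \in rC r i /\ content (chosen r i) /\
    x = Some (inp r (chosen r i)))).
End MVSemantics.

(* Main.v *)
Require Import Defs.
From HB Require Import structures.
From mathcomp Require Import all_boot all_order all_algebra.
From mathcomp Require Import all_classical all_reals all_analysis.
Import Order.TTheory GRing.Theory Num.Theory numFieldNormedType.Exports.
Lemma exists_subset {n W : nat} (C : {set 'I_n}) : (W <= #|C|)%N ->
  exists S : {set 'I_n}, S \subset C /\ #|S| = W.
Proof.
move=> hW; exists [set x in take W (enum C)]; split.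
  by apply/fintype.subsetP => x; rewrite inE => /mem_take; rewrite mem_enum.
rewrite cardsE; have /card_uniqP -> : uniq (take W (enum C)).
  by apply: take_uniq; exact: enum_uniq.
by rewrite size_takel // -cardE.
Qed.

Lemma size_filter_card (n : nat) (p : 'I_n -> bool) :
  size [seq j <- enum 'I_n | p j] = #|[set j | p j]|.
Proof.
rewrite cardsE cardE; apply: perm_size; apply: uniq_perm.
- by apply: filter_uniq; exact: enum_uniq.
- exact: enum_uniq.
- by move=> x; rewrite mem_filter !mem_enum andbT.
Qed.

Lemma det (V : eqType) (v : V) n W B (r : MVRun V n) :
  wf_run W r -> (forall i, inp r i = v) ->
  committee_ok W B (initCommittee r) -> committee_ok W B (convCommittee r) ->
  BA_good W B r -> forall i, decides W r i (Some v).
Proof.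
move=> [hI [hC hch]] hinp [cI _] [cC cC2] [_ [hun hterm]] i.
have hcont : forall j, Defs.content W r j.
  by move=> j; apply/allP => k _; rewrite !hinp.
have hBW : (B < W)%N.
  have [S [sS cS]] := @exists_subset _ _ _ cC.
  by have := cC2 S S sS sS cS cS; rewrite finset.setIid cS.
have hsI : forall j, (W <= size (rI r j))%N.
  by move=> j; rewrite (perm_size (hI j)) size_filter_card.
have hsC : forall j, size (rC r j) = #|convCommittee r|.
  move=> j; rewrite (perm_size (hC j)) -size_filter_card.
  by congr size; apply: eq_filter => k; rewrite /convSender hsI andbT.
have hinv : forall j, invokesBA W r j by move=> j; rewrite /invokesBA hsC.
have hal : forall j, alert W B r j = false.
  move=> j; rewrite /alert /cnt (eq_count (a2 := predT)); last by move=> k; rewrite hcont.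
  rewrite count_predT size_takel; last exact: hinv.
  by apply/negbTE; rewrite -leqNgt.
have hb : forall j, baout r j = Some false.
  move=> j; case E : (baout r j) => [b|]; last by have := hterm hinv j (hinv j); rewrite E.
  by rewrite (hun false (fun k => conj (hinv k) (hal k)) j b (hinv j) E).
split; first exact: hinv.
right; split; first exact: hb.
have hhas : has (Defs.content W r) (rC r i).
  case E : (rC r i) => [|x s] /=; last by rewrite hcont.
  by have := hinv i; rewrite /invokesBA E leqn0 => /eqP W0; rewrite W0 in hBW.
have /andP [h1 h2] := hch i hhas.
by split; [|split]; rewrite ?hinp.
Qed.
Local Open Scope classical_set_scope.
Local Open Scope ring_scope.
Lemma ebound (R : realType) (x y z : \bar R) :
  (0 <= x)%E -> (x <= 1)%E -> (0 <= y)%E -> (y <= 1)%E -> (0 <= z)%E -> (z <= 1)%E ->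
  (x + y - z <= 1)%E -> fine x + fine y - 1 <= fine z <= 1.
Proof.
case: x => [x| |]; case: y => [y| |]; case: z => [z| |] => //=; rewrite ?leey_eq //.

rewrite !lee_fin /= => _ _ _ _ _ hz; move=> h; have {h} h : x + y - z <= 1 by rewrite -lee_fin; exact: h.
by rewrite hz andbT lerBlDr -lerBlDl.
Qed.

Lemma inter_prob (R : realType) d (T : measurableType d) (P : probability T R)
  (A B : set T) : measurable A -> measurable B ->
  fine (P A) + fine (P B) - 1 <= fine (P (A `&` B)) <= 1.
Proof.
move=> mA mB.
have fA : P A \is a fin_num by rewrite fin_num_measure.
have mI : measurable (A `&` B) by exact: measurableI.
have hU := measureUfinl (mu:=P) mA mB (ltac:(by rewrite ltey_eq fA)).
have hU1 := probability_le1 P (measurableU _ _ mA mB).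
rewrite hU in hU1.
apply: ebound; [exact: measure_ge0|exact: probability_le1|exact: measure_ge0|exact: probability_le1|exact: measure_ge0|exact: probability_le1|exact: hU1].
Qed.

Lemma inter_cvg (R : realType) (disp : measure_display) (Omega : nat -> measurableType disp)
  (P : forall n, probability (Omega n) R) (A B : forall n, set (Omega n)) :
  (forall n, measurable (A n)) -> (forall n, measurable (B n)) ->
  ((fun n => P n (A n)) @ \oo --> 1%E) -> ((fun n => P n (B n)) @ \oo --> 1%E) ->
  ((fun n => P n (A n `&` B n)) @ \oo --> 1%E).
Proof.
move=> mA mB /fine_cvgP [_ cA] /fine_cvgP [_ cB].
apply/fine_cvgP; split.
  by near=> n; apply: fin_num_measure; apply: measurableI; [exact: mA|exact: mB].
apply: (@squeeze_cvgr _ _ _ _ (fun n => fine (P n (A n)) + fine (P n (B n)) - 1) (fun=> 1)).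
- by apply: nearW => n; exact: inter_prob.
- pose l : R := 1 + 1 - 1.
  have h : (fun n : nat => fine (P n (A n)) + fine (P n (B n)) - 1) @ \oo --> l.
    by apply: cvgB; [exact: cvgD|exact: cvg_cst].
  by rewrite /l addrK in h.
- exact: cvg_cst.
Unshelve. all: by end_near.
Qed.
Theorem mainTheorem2 (R : realType) (V : eqType) (v : V)
  (eps dd : nat -> R)
  (disp : measure_display) (Omega : nat -> measurableType disp)
  (P : forall n, probability (Omega n) R)
  (run : forall n, Omega n -> MVRun V n) :
  (\forall n \near \oo, params_ok n (eps n) (dd n)) ->
  (* every outcome is a fault-free run of MV in which all processes propose v *)
  (forall n w, wf_run (Wpar n (dd n)) (run n w)) ->
  (forall n w i, inp (run n w) i = v) ->
  (* WHP, the INIT committee satisfies (S3)-(S5) *)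
  (exists G : forall n, set (Omega n), (forall n, measurable (G n)) /\
     ((fun n => P n (G n)) @ \oo --> 1%E) /\
     (forall n w, G n w ->
        committee_ok (Wpar n (dd n)) (Bpar n (dd n)) (initCommittee (run n w)))) ->
  (* WHP, the CONVERGE committee satisfies (S3)-(S5) *)
  (exists G : forall n, set (Omega n), (forall n, measurable (G n)) /\
     ((fun n => P n (G n)) @ \oo --> 1%E) /\
     (forall n w, G n w ->
        committee_ok (Wpar n (dd n)) (Bpar n (dd n)) (convCommittee (run n w)))) ->
  (* WHP, the binary BA satisfies agreement, strong unanimity, termination *)
  (exists G : forall n, set (Omega n), (forall n, measurable (G n)) /\
     ((fun n => P n (G n)) @ \oo --> 1%E) /\
     (forall n w, G n w ->
        BA_good (Wpar n (dd n)) (Bpar n (dd n)) (run n w))) ->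
  (* conclusion: WHP all processes decide v *)
  exists E : forall n, set (Omega n), (forall n, measurable (E n)) /\
     ((fun n => P n (E n)) @ \oo --> 1%E) /\
     (forall n w, E n w -> forall i : 'I_n,
        decides (Wpar n (dd n)) (run n w) i (Some v)).
Proof.
move=> _ hwf hinp [G1 [m1 [c1 h1]]] [G2 [m2 [c2 h2]]] [G3 [m3 [c3 h3]]].
exists (fun n => G1 n `&` G2 n `&` G3 n); split.
  by move=> n; apply: measurableI; [apply: measurableI|].
split.
  apply: (@inter_cvg R disp Omega P (fun n => G1 n `&` G2 n) G3) => //.
    by move=> n; apply: measurableI.
  exact: (@inter_cvg R disp Omega P G1 G2).
move=> n w [[g1 g2] g3] i.
exact: (@det _ v _ _ _ _ (hwf n w) (hinp n w) (h1 n w g1) (h2 n w g2) (h3 n w g3) i).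
Qed.
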